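(* Suppose Assumption 1 holds and every $d^k$ satisfies the $\eta$-inexactness condition for a fixed $\eta\in[0,1)$ ($f$ need not be convex). For $t\ge0$ let $G_t\coloneqq\arg\min_dQ^{x^t}_I(d)$ (the minimizer with $H=I$). For Algorithm 1, if $\sigma I\preceq H_k\preceq MI$ for all $k$ with $M\ge\sigma>0$, then for all $k\ge0$ $$\min_{0\le t\le k}\|G_t\|^2\le\frac{F(x^0)-F^*}{\gamma(k+1)}\cdot\frac{M^2\left(1+\frac1\sigma+\sqrt{1-\frac2M+\frac1{\sigma^2}}\right)^2}{2(1-\eta)\sigma\min_{0\le t\le k}\alpha_t}$$ $$\le\frac{F(x^0)-F^*}{\gamma(k+1)}\cdot\frac{M^2\left(1+\frac1\sigma+\sqrt{1-\frac2M+\frac1{\sigma^2}}\right)^2}{2\sigma}\max\left\{\frac1{1-\eta},\ \frac{L}{2(1-\sqrt\eta)(1-\gamma)\sigma\beta}\right\}.$$ For Algorithm 2, if the initial matrices satisfy $m_0I\preceq H^0_k\preceq M_0I$ with $M_0\ge m_0>0$ for all $k$, then for Variant 1 $$\min_{0\le t\le k}\|G_t\|^2\le\frac{F(x^0)-F^*}{\gamma(k+1)}\cdot\frac{\tilde M_1(\eta)^2\left(1+\frac1{m_0}+\sqrt{1-\frac2{\tilde M_1(\eta)}+\frac1{m_0^2}}\right)^2}{2(1-\eta)m_0},$$ and for Variant 2 the same bound holds with $\tilde M_1(\eta)$ replaced by $\tilde M_2(\eta)$.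
   Context: Problem setting: $F(x)=f(x)+\psi(x)$ on $\mathbb{R}^n$, $F^*=\inf F$. Assumption 1: $f$ is differentiable with $L$-Lipschitz continuous gradient ($L>0$); $\psi:\mathbb{R}^n\to\mathbb{R}\cup\{+\infty\}$ is convex, proper and closed; $F$ is bounded below; the solution set $\Omega=\{x:F(x)=F^*\}$ is nonempty. For $x\in\mathbb{R}^n$ and symmetric $H$, $Q^x_H(d)\coloneqq\nabla f(x)^Td+\frac12d^THd+\psi(x+d)-\psi(x)$, $Q^*=\inf_dQ^x_H(d)$; $d$ satisfies the $\eta$-inexactness condition if $Q^x_H(d)\le(1-\eta)Q^*$. Algorithm 1: given $\beta,\gamma\in(0,1)$, $x^0$, fixed $\eta\in[0,1)$; for $k=0,1,\dots$: choose symmetric $H_k$ with $Q_k\coloneqq Q^{x^k}_{H_k}$ strongly convex; compute $d^k$ satisfying the $\eta$-inexactness condition for $Q_k$; let $\Delta_k=\nabla f(x^k)^Td^k+\psi(x^k+d^k)-\psi(x^k)$; let $\alpha_k=\beta^i$ for the smallest nonnegative integer $i$ with $F(x^k+\alpha_kd^k)\le F(x^k)+\alpha_k\gamma\Delta_k$; set $x^{k+1}=x^k+\alpha_kd^k$. Algorithm 2: given $\beta\in(0,1)$, $\gamma\in(0,1]$, $x^0$, fixed $\eta\in[0,1)$; for each $k$: choose symmetric $H^0_k$ (in Variant 1, $H^0_k\succ0$); set $\alpha_k\leftarrow1$, $H_k\leftarrow H^0_k$, compute $d^k$ satisfying the $\eta$-inexactness condition for $Q^{x^k}_{H_k}$;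 while $F(x^k)-F(x^k+d^k)\ge-\gamma Q^{x^k}_{H_k}(d^k)\ge0$ fails: Variant 1 sets $\alpha_k\leftarrow\beta\alpha_k$, $H_k\leftarrow H^0_k/\alpha_k$; Variant 2 sets $H_k\leftarrow H^0_k+\alpha_k^{-1}I$, then $\alpha_k\leftarrow\beta\alpha_k$; then $d^k$ is recomputed satisfying the $\eta$-inexactness condition. Finally $x^{k+1}=x^k+d^k$; ''final $H_k$'' is the accepted matrix. Constants: $\tilde M_2(\eta)\coloneqq M_0+\max\{1,\frac1\beta(\frac{L(1+\sqrt\eta)}{2-\gamma(1-\sqrt\eta)}-m_0)\}$, $\tilde M_1(\eta)\coloneqq M_0\max\{1,\frac{L(1+\sqrt\eta)}{\beta(2-\gamma(1-\sqrt\eta))m_0}\}$. *)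

(* Defs.v *)
From Stdlib Require Import Reals Lra Lia.
From Stdlib Require Fin.
Open Scope R_scope.

Definition V (n : nat) := Fin.t n -> R.
Definition Mat (n : nat) := Fin.t n -> Fin.t n -> R.

Fixpoint fsum (n : nat) : (Fin.t n -> R) -> R :=
  match n with
  | O => fun _ => 0
  | S m => fun g => g (@Fin.F1 m) + fsum m (fun i => g (Fin.FS i))
  end.

Definition vadd {n} (x y : V n) : V n := fun i => x i + y i.
Definition vsub {n} (x y : V n) : V n := fun i => x i - y i.
Definition vscale {n} (a : R) (x : V n) : V n := fun i => a * x i.
Definition dot {n} (x y : V n) : R := fsum n (fun i => x i * y i).
Definition vnorm {n} (x : V n) : R := sqrt (dot x x).

Definition mv {n} (A : Mat n) (x : V n) : V n := fun i => fsum n (fun j => A i j * x j).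
Definition quad {n} (A : Mat n) (d : V n) : R := dot d (mv A d).
Definition Iden (n : nat) : Mat n := fun i j => if Fin.eq_dec i j then 1 else 0.
Definition madd {n} (A B : Mat n) : Mat n := fun i j => A i j + B i j.
Definition mscale {n} (a : R) (A : Mat n) : Mat n := fun i j => a * A i j.
Definition symmetric {n} (A : Mat n) : Prop := forall i j, A i j = A j i.
Definition loewner_between {n} (lo hi : R) (A : Mat n) : Prop :=
  forall d : V n, lo * dot d d <= quad A d /\ quad A d <= hi * dot d d.

Definition has_gradient {n} (f : V n -> R) (gf : V n -> V n) : Prop :=
  forall x eps, 0 < eps -> exists delta, 0 < delta /\
    forall h : V n, vnorm h < delta ->
      Rabs (f (vadd x h) - f x - dot (gf x) h) <= eps * vnorm h.

Definition lipschitz_grad {n} (gf : V n -> V n) (L : R) : Prop :=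
  forall x y : V n, vnorm (vsub (gf x) (gf y)) <= L * vnorm (vsub x y).

(* psi : R^n -> R U {+oo} is represented by its effective domain dom and its
   finite values psi on dom (psi = +oo outside dom). *)
Definition ext_proper {n} (dom : V n -> Prop) : Prop := exists x, dom x.

Definition ext_convex {n} (dom : V n -> Prop) (psi : V n -> R) : Prop :=
  forall x y t, dom x -> dom y -> 0 <= t <= 1 ->
    dom (vadd (vscale t x) (vscale (1 - t) y)) /\
    psi (vadd (vscale t x) (vscale (1 - t) y)) <= t * psi x + (1 - t) * psi y.

(* closed = closed epigraph {(x,c) | x in dom, psi x <= c} *)
Definition ext_closed {n} (dom : V n -> Prop) (psi : V n -> R) : Prop :=
  forall (u : nat -> V n) (c : nat -> R) (u0 : V n) (c0 : R),
    (forall k, dom (u k) /\ psi (u k) <= c k) ->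
    Un_cv (fun k => vnorm (vsub (u k) u0)) 0 ->
    Un_cv c c0 ->
    dom u0 /\ psi u0 <= c0.

Definition Fval {n} (f psi : V n -> R) (x : V n) : R := f x + psi x.

Definition assumption1 {n} (f : V n -> R) (gf : V n -> V n) (L : R)
  (dom : V n -> Prop) (psi : V n -> R) (Fstar : R) : Prop :=
  has_gradient f gf /\ 0 < L /\ lipschitz_grad gf L /\
  ext_proper dom /\ ext_convex dom psi /\ ext_closed dom psi /\
  (forall x, dom x -> Fstar <= Fval f psi x) /\
  (exists x, dom x /\ Fval f psi x = Fstar).

(* Q^x_H(d), valid when x, x+d in dom *)
Definition Qval {n} (gf : V n -> V n) (psi : V n -> R) (x : V n) (H : Mat n) (d : V n) : R :=
  dot (gf x) d + / 2 * quad H d + psi (vadd x d) - psi x.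

Definition is_Qinf {n} (dom : V n -> Prop) (gf : V n -> V n) (psi : V n -> R)
  (x : V n) (H : Mat n) (q : R) : Prop :=
  (forall d, dom (vadd x d) -> q <= Qval gf psi x H d) /\
  (forall q', (forall d, dom (vadd x d) -> q' <= Qval gf psi x H d) -> q' <= q).

Definition inexact {n} (dom : V n -> Prop) (gf : V n -> V n) (psi : V n -> R)
  (x : V n) (H : Mat n) (eta : R) (d : V n) : Prop :=
  dom (vadd x d) /\
  exists q, is_Qinf dom gf psi x H q /\ Qval gf psi x H d <= (1 - eta) * q.

Definition is_argmin_QI {n} (dom : V n -> Prop) (gf : V n -> V n) (psi : V n -> R)
  (x G : V n) : Prop :=
  dom (vadd x G) /\
  forall d, dom (vadd x d) -> Qval gf psi x (Iden n) G <= Qval gf psi x (Iden n) d.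

Fixpoint min_upto (k : nat) (g : nat -> R) : R :=
  match k with
  | O => g O
  | S k' => Rmin (min_upto k' g) (g (S k'))
  end.

Definition Delta {n} (gf : V n -> V n) (psi : V n -> R) (x d : V n) : R :=
  dot (gf x) d + psi (vadd x d) - psi x.

Definition armijo_ok {n} (f : V n -> R) (gf : V n -> V n) (dom : V n -> Prop)
  (psi : V n -> R) (gamma : R) (x d : V n) (a : R) : Prop :=
  dom (vadd x (vscale a d)) /\
  Fval f psi (vadd x (vscale a d)) <= Fval f psi x + a * gamma * Delta gf psi x d.

Definition alg1_run {n} (f : V n -> R) (gf : V n -> V n) (dom : V n -> Prop)
  (psi : V n -> R) (eta beta gamma sigma M : R)
  (x : nat -> V n) (H : nat -> Mat n) (d : nat -> V n) (alpha : nat -> R) : Prop :=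
  dom (x O) /\
  forall k,
    symmetric (H k) /\ loewner_between sigma M (H k) /\
    inexact dom gf psi (x k) (H k) eta (d k) /\
    (exists i : nat, alpha k = beta ^ i /\
       armijo_ok f gf dom psi gamma (x k) (d k) (beta ^ i) /\
       forall j : nat, (j < i)%nat -> ~ armijo_ok f gf dom psi gamma (x k) (d k) (beta ^ j)) /\
    x (S k) = vadd (x k) (vscale (alpha k) (d k)).

Definition accept2 {n} (f : V n -> R) (gf : V n -> V n) (psi : V n -> R)
  (gamma : R) (x : V n) (H : Mat n) (d : V n) : Prop :=
  Fval f psi x - Fval f psi (vadd x d) >= - gamma * Qval gf psi x H d /\
  - gamma * Qval gf psi x H d >= 0.

(* trial matrix after i rejections *)
Definition Htrial1 {n} (beta : R) (H0 : Mat n) (i : nat) : Mat n :=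
  mscale (/ beta ^ i) H0.
Definition Htrial2 {n} (beta : R) (H0 : Mat n) (i : nat) : Mat n :=
  match i with
  | O => H0
  | S i' => madd H0 (mscale (/ beta ^ i') (Iden n))
  end.

(* jk k = number of rejections at outer iteration k; D k i = i-th trial direction *)
Definition alg2_run {n} (Htr : R -> Mat n -> nat -> Mat n)
  (f : V n -> R) (gf : V n -> V n) (dom : V n -> Prop)
  (psi : V n -> R) (eta beta gamma m0 M0 : R)
  (x : nat -> V n) (H0 : nat -> Mat n) (jk : nat -> nat) (D : nat -> nat -> V n) : Prop :=
  dom (x O) /\
  forall k,
    symmetric (H0 k) /\ loewner_between m0 M0 (H0 k) /\
    (forall i, (i <= jk k)%nat -> inexact dom gf psi (x k) (Htr beta (H0 k) i) eta (D k i)) /\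
    (forall i, (i < jk k)%nat -> ~ accept2 f gf psi gamma (x k) (Htr beta (H0 k) i) (D k i)) /\
    accept2 f gf psi gamma (x k) (Htr beta (H0 k) (jk k)) (D k (jk k)) /\
    x (S k) = vadd (x k) (D k (jk k)).

Definition Mtilde2 (L beta gamma m0 M0 eta : R) : R :=
  M0 + Rmax 1 (/ beta * (L * (1 + sqrt eta) / (2 - gamma * (1 - sqrt eta)) - m0)).
Definition Mtilde1 (L beta gamma m0 M0 eta : R) : R :=
  M0 * Rmax 1 (L * (1 + sqrt eta) / (beta * (2 - gamma * (1 - sqrt eta)) * m0)).

Definition cst (M s : R) : R :=
  M ^ 2 * (1 + / s + sqrt (1 - 2 / M + / s ^ 2)) ^ 2.

(* Main.v *)
Require Import Defs.
From Stdlib Require Import Reals Lra Lia Psatz FunctionalExtensionality.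
From Stdlib Require Fin.
Open Scope R_scope.


Lemma fsum_ext n (g h : Fin.t n -> R) : (forall i, g i = h i) -> fsum n g = fsum n h.
Proof. induction n; simpl; intros E; [reflexivity|]. rewrite E; f_equal; apply IHn; auto. Qed.

Lemma fsum_add n (g h : Fin.t n -> R) : fsum n (fun i => g i + h i) = fsum n g + fsum n h.
Proof. induction n; simpl; [lra|]. rewrite IHn. lra. Qed.

Lemma fsum_scal n c (g : Fin.t n -> R) : fsum n (fun i => c * g i) = c * fsum n g.
Proof. induction n; simpl; [lra|]. rewrite IHn. lra. Qed.

Lemma fsum_nonneg n (g : Fin.t n -> R) : (forall i, 0 <= g i) -> 0 <= fsum n g.
Proof. induction n; simpl; intros E; [lra|]. pose proof (E Fin.F1). pose proof (IHn (fun i => g (Fin.FS i)) (fun i => E _)). lra. Qed.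

Lemma fsum_zero n : fsum n (fun _ => 0) = 0.
Proof. induction n; simpl; [lra|]. rewrite IHn. lra. Qed.

Lemma fsum_delta n (i : Fin.t n) (d : Fin.t n -> R) :
  fsum n (fun j => (if Fin.eq_dec i j then 1 else 0) * d j) = d i.
Proof.
  induction n.
  - inversion i.
  - revert d. pattern i. apply Fin.caseS'; [intros d; simpl|intros p d; simpl].
    + destruct (Fin.eq_dec Fin.F1 Fin.F1) as [_|C]; [|congruence].
      rewrite (fsum_ext _ _ (fun _ => 0)). rewrite fsum_zero; lra.
      intros j. destruct (Fin.eq_dec Fin.F1 (Fin.FS j)) as [C|_]; [inversion C|lra].
    + destruct (Fin.eq_dec (Fin.FS p) Fin.F1) as [C|_]; [inversion C|].
      rewrite (fsum_ext _ _ (fun j => (if Fin.eq_dec p j then 1 else 0) * d (Fin.FS j))).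
      rewrite IHn. lra.
      intros j. destruct (Fin.eq_dec (Fin.FS p) (Fin.FS j)) as [C|C];
        destruct (Fin.eq_dec p j) as [C'|C']; auto.
      * apply Fin.FS_inj in C. congruence.
      * subst. congruence.
Qed.

Section Dot.
Context {n : nat}.
Implicit Types u v w : V n.

Lemma dot_comm u v : dot u v = dot v u.
Proof. unfold dot. apply fsum_ext; intros; ring. Qed.
Lemma dot_add_r u v w : dot u (vadd v w) = dot u v + dot u w.
Proof. unfold dot, vadd. rewrite <- fsum_add. apply fsum_ext; intros; ring. Qed.
Lemma dot_add_l u v w : dot (vadd v w) u = dot v u + dot w u.
Proof. rewrite dot_comm, dot_add_r, !(dot_comm u). reflexivity. Qed.
Lemma dot_scal_r a u v : dot u (vscale a v) = a * dot u v.
Proof. unfold dot, vscale. rewrite <- fsum_scal. apply fsum_ext; intros; ring. Qed.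
Lemma dot_scal_l a u v : dot (vscale a u) v = a * dot u v.
Proof. rewrite dot_comm, dot_scal_r, dot_comm. reflexivity. Qed.
Lemma dot_sub_l u v w : dot (vsub v w) u = dot v u - dot w u.
Proof. unfold dot, vsub.
  rewrite (fsum_ext _ _ (fun i => v i * u i + (-1) * (w i * u i))) by (intros; ring).
  rewrite fsum_add, fsum_scal. ring. Qed.
Lemma dot_nonneg u : 0 <= dot u u.
Proof. unfold dot. apply fsum_nonneg. intros; nra. Qed.

Lemma dot_quadexp u v l : dot (vsub u (vscale l v)) (vsub u (vscale l v))
  = dot u u - 2 * l * dot u v + l * l * dot v v.
Proof. unfold dot, vsub, vscale.
  rewrite (fsum_ext _ _ (fun i => u i * u i + (-2 * l) * (u i * v i) + (l * l) * (v i * v i))) by (intros; ring).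
  rewrite !fsum_add, !fsum_scal. ring. Qed.

Lemma cauchy_schwarz u v : dot u v <= vnorm u * vnorm v.
Proof.
  set (a := dot u u). set (b := dot v v). set (c := dot u v).
  assert (Q : forall l, 0 <= a - 2 * l * c + l * l * b).
  { intros l. unfold a, b, c. rewrite <- dot_quadexp. apply dot_nonneg. }
  assert (Ha : 0 <= a) by apply dot_nonneg. assert (Hb : 0 <= b) by apply dot_nonneg.
  assert (C2 : c * c <= a * b).
  { destruct (Req_dec b 0) as [B0|B0].
    - rewrite B0. destruct (Req_dec c 0) as [C0|C0]; [rewrite C0; lra|].
      specialize (Q ((a + 1) / (2 * c))). rewrite B0 in Q.
      replace (2 * ((a + 1) / (2 * c)) * c) with (a + 1) in Q by (field; auto). lra.
    - specialize (Q (c / b)).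
      replace (a - 2 * (c / b) * c + c / b * (c / b) * b) with (a - c * c / b) in Q by (field; auto).
      assert (0 < b) by lra.
      assert (c * c / b <= a) by lra.
      apply (Rmult_le_compat_r b) in H0; [|lra].
      unfold Rdiv in H0. rewrite Rmult_assoc, Rinv_l in H0 by lra. lra. }
  unfold vnorm. rewrite <- sqrt_mult_alt by auto. fold a b.
  apply Rle_trans with (Rabs c); [apply Rle_abs|].
  rewrite <- sqrt_Rsqr_abs. apply sqrt_le_1_alt. unfold Rsqr. exact C2.
Qed.

Lemma dot_scal_scal a u : dot (vscale a u) (vscale a u) = a * a * dot u u.
Proof. rewrite dot_scal_l, dot_scal_r. ring. Qed.

Lemma vnorm_scale a u : vnorm (vscale a u) = Rabs a * vnorm u.
Proof. unfold vnorm. rewrite dot_scal_scal. rewrite sqrt_mult_alt by nra.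
  rewrite <- sqrt_Rsqr_abs. reflexivity. Qed.

Lemma vnorm_sq u : vnorm u * vnorm u = dot u u.
Proof. unfold vnorm. apply sqrt_sqrt, dot_nonneg. Qed.

Lemma mv_scal (H : Mat n) a u : mv H (vscale a u) = vscale a (mv H u).
Proof. apply functional_extensionality; intro i. unfold mv, vscale.
  rewrite <- fsum_scal. apply fsum_ext; intros; ring. Qed.

Lemma quad_scal (H : Mat n) a u : quad H (vscale a u) = a * a * quad H u.
Proof. unfold quad. rewrite mv_scal, dot_scal_l, dot_scal_r. ring. Qed.

Lemma quad_mscale (H : Mat n) a u : quad (mscale a H) u = a * quad H u.
Proof. unfold quad. rewrite <- dot_scal_r. f_equal. apply functional_extensionality; intro i.
  unfold mv, mscale, vscale. rewrite <- fsum_scal. apply fsum_ext; intros; ring. Qed.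

Lemma quad_madd (A B : Mat n) u : quad (madd A B) u = quad A u + quad B u.
Proof. unfold quad. rewrite <- dot_add_r. f_equal. apply functional_extensionality; intro i.
  unfold mv, madd, vadd. rewrite <- fsum_add. apply fsum_ext; intros; ring. Qed.

Lemma quad_Iden u : quad (Iden n) u = dot u u.
Proof. unfold quad. f_equal. apply functional_extensionality; intro i.
  unfold mv, Iden. apply fsum_delta. Qed.

End Dot.


Lemma dpl_ext (f1 f2 : R -> R) x l : (forall t, f1 t = f2 t) -> derivable_pt_lim f1 x l -> derivable_pt_lim f2 x l.
Proof. intros E. replace f2 with f1 by (apply functional_extensionality; auto). auto. Qed.

Lemma descent {n} (f : V n -> R) gf L x h :
  has_gradient f gf -> lipschitz_grad gf L -> 0 <= L ->
  f (vadd x h) <= f x + dot (gf x) h + L / 2 * dot h h.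
Proof.
  intros HG HL L0.
  set (p := fun t => vadd x (vscale t h)).
  set (g := fun t => f (p t)).
  assert (Pts : forall t s, vadd (p t) (vscale s h) = p (t + s)).
  { intros t s. apply functional_extensionality; intro i. unfold p, vadd, vscale. ring. }
  assert (Dg : forall t, derivable_pt_lim g t (dot (gf (p t)) h)).
  { intros t eps Heps.
    set (nh := vnorm h). assert (Hnh : 0 <= nh) by apply sqrt_pos.
    destruct (HG (p t) (eps / (2 * (nh + 1)))) as [del [Hdel Hb]].
    { apply Rdiv_lt_0_compat; lra. }
    assert (Hd' : 0 < del / (nh + 1)) by (apply Rdiv_lt_0_compat; lra).
    exists (mkposreal _ Hd'). simpl. intros s Hs0 Hs.
    assert (Hv : vnorm (vscale s h) < del).
    { rewrite vnorm_scale. fold nh.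
      assert (Rabs s * (nh + 1) < del).
      { apply (Rmult_lt_compat_r (nh+1)) in Hs; [|lra].
        unfold Rdiv in Hs. rewrite Rmult_assoc, Rinv_l in Hs by lra. lra. }
      assert (0 <= Rabs s) by apply Rabs_pos. nra. }
    specialize (Hb _ Hv). rewrite Pts, vnorm_scale, dot_scal_r in Hb. fold nh in Hb.
    unfold g. set (A := f (p (t + s)) - f (p t) - s * dot (gf (p t)) h) in *.
    replace ((f (p (t + s)) - f (p t)) / s - dot (gf (p t)) h) with (A / s)
      by (unfold A; field; auto).
    unfold Rdiv. rewrite Rabs_mult, Rabs_inv.
    assert (Hs1 : 0 < Rabs s) by (apply Rabs_pos_lt; auto).
    apply Rle_lt_trans with (eps / (2 * (nh + 1)) * nh).
    - apply (Rmult_le_reg_r (Rabs s)); auto.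
      rewrite Rmult_assoc, Rinv_l by lra. lra.
    - assert (eps / (2 * (nh + 1)) * nh = eps * (nh / (2 * (nh + 1)))) by (field; lra).
      rewrite H. assert (nh / (2 * (nh + 1)) < 1).
      { apply (Rmult_lt_reg_r (2 * (nh + 1))); [lra|]. unfold Rdiv.
        rewrite Rmult_assoc, Rinv_l by lra. lra. }
      nra. }
  set (a := dot (gf x) h). set (D := dot h h).
  set (phi := fun t => g t - t * a - L / 2 * D * t ^ 2).
  assert (Dphi : forall t, derivable_pt_lim phi t (dot (gf (p t)) h - a - L * D * t)).
  { intros t.
    assert (H1 : derivable_pt_lim (fun t => t * a) t a).
    { apply (dpl_ext (mult_real_fct a id)). intros; unfold mult_real_fct, id; ring.
      replace a with (a * 1) at 2 by ring. apply derivable_pt_lim_scal, derivable_pt_lim_id. }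
    assert (H2 : derivable_pt_lim (fun t => L / 2 * D * t ^ 2) t (L * D * t)).
    { apply (dpl_ext (mult_real_fct (L / 2 * D) (fun y => y ^ 2))). intros; reflexivity.
      replace (L * D * t) with (L / 2 * D * (INR 2 * t ^ Init.Nat.pred 2)) by (simpl; field).
      apply derivable_pt_lim_scal, derivable_pt_lim_pow. }
    pose proof (derivable_pt_lim_minus _ _ _ _ _ (derivable_pt_lim_minus _ _ _ _ _ (Dg t) H1) H2) as H3.
    revert H3. apply dpl_ext. intros; unfold phi, minus_fct. reflexivity. }
  destruct (MVT_cor2 phi (fun t => dot (gf (p t)) h - a - L * D * t) 0 1 Rlt_0_1
     (fun c _ => Dphi c)) as [c [Ec Hc]].
  assert (Bc : dot (gf (p c)) h - a <= L * D * c).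
  { unfold a. rewrite <- dot_sub_l.
    eapply Rle_trans; [apply cauchy_schwarz|].
    assert (E : vsub (p c) x = vscale c h).
    { apply functional_extensionality; intro i. unfold p, vsub, vadd, vscale. ring. }
    pose proof (HL (p c) x) as Hl. rewrite E, vnorm_scale, Rabs_right in Hl by lra.
    assert (0 <= vnorm h) by apply sqrt_pos.
    assert (0 <= vnorm (vsub (gf (p c)) (gf x))) by apply sqrt_pos.
    unfold D. rewrite <- vnorm_sq. nra. }
  assert (P0 : p 0 = x).
  { apply functional_extensionality; intro i. unfold p, vadd, vscale. ring. }
  assert (P1' : p 1 = vadd x h).
  { apply functional_extensionality; intro i. unfold p, vadd, vscale. ring. }
  unfold phi, g in Ec. rewrite P0, P1' in Ec.
  assert (0 <= D) by apply dot_nonneg.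
  fold a D. nra.
Qed.


Lemma Rdiv_le_0_compat a b : 0 <= a -> 0 < b -> 0 <= a / b.
Proof. intros. unfold Rdiv. apply Rmult_le_pos; auto. left; apply Rinv_0_lt_compat; auto. Qed.


Lemma seg_dom {N : nat} (dom : V N -> Prop) (gf : V N -> V N) (psi : V N -> R) x d t : ext_convex dom psi -> dom x -> dom (vadd x d) -> 0 <= t <= 1 ->
  dom (vadd x (vscale t d)) /\ psi (vadd x (vscale t d)) <= t * psi (vadd x d) + (1 - t) * psi x.
Proof.
  intros C Dx Dd Ht. destruct (C (vadd x d) x t Dd Dx Ht) as [A B].
  replace (vadd (vscale t (vadd x d)) (vscale (1 - t) x)) with (vadd x (vscale t d)) in *
    by (apply functional_extensionality; intro i; unfold vadd, vscale; ring). auto.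
Qed.

Lemma Q_seg {N : nat} (dom : V N -> Prop) (gf : V N -> V N) (psi : V N -> R) x H d t : ext_convex dom psi -> dom x -> dom (vadd x d) -> 0 <= t <= 1 ->
  Qval gf psi x H (vscale t d) <= t * Qval gf psi x H d - t * (1 - t) / 2 * quad H d.
Proof.
  intros C Dx Dd Ht. destruct (seg_dom dom gf psi x d t C Dx Dd Ht) as [_ B].
  unfold Qval. rewrite dot_scal_r, quad_scal. nra.
Qed.

Lemma Qinf_nonpos {N : nat} (dom : V N -> Prop) (gf : V N -> V N) (psi : V N -> R) x H q : dom x -> is_Qinf dom gf psi x H q -> q <= 0.
Proof.
  intros Dx [Hq _].
  assert (E : vadd x (vscale 0 x) = x) by
    (apply functional_extensionality; intro i; unfold vadd, vscale; ring).
  specialize (Hq (vscale 0 x)). rewrite E in Hq. specialize (Hq Dx).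
  unfold Qval in Hq. rewrite dot_scal_r, quad_scal, E in Hq. lra.
Qed.

Lemma inexact_bound {N : nat} (dom : V N -> Prop) (gf : V N -> V N) (psi : V N -> R) x H eta d q m : ext_convex dom psi -> dom x -> dom (vadd x d) ->
  0 <= eta < 1 -> is_Qinf dom gf psi x H q -> Qval gf psi x H d <= (1 - eta) * q ->
  m * dot d d <= quad H d -> 0 < m ->
  m * dot d d <= 2 * (1 + sqrt eta) ^ 2 * (- q).
Proof.
  intros C Dx Dd He Hq Qd Hm m0.
  assert (q0 : q <= 0) by exact (Qinf_nonpos dom gf psi x H q Dx Hq).
  assert (Key : forall t, 0 <= t <= 1 -> t * (1 - t) * (m * dot d d) / 2 <= - q * (1 - t * (1 - eta))).
  { intros t Ht. destruct Hq as [Hq _].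
    pose proof (Hq _ (proj1 (seg_dom dom gf psi x d t C Dx Dd Ht))) as A.
    pose proof (Q_seg dom gf psi x H d t C Dx Dd Ht) as B.
    assert (0 <= t * (1 - t)) by nra. nra. }
  set (s := sqrt eta). assert (s0 : 0 <= s) by apply sqrt_pos.
  assert (ss : s * s = eta) by (apply sqrt_sqrt; lra).
  assert (s1 : s < 1) by nra.
  set (X := m * dot d d). assert (X0 : 0 <= X) by (pose proof (dot_nonneg d); unfold X; nra).
  destruct (Req_dec eta 0) as [E0|E0].
  - assert (s = 0) by (rewrite E0 in ss; nra). rewrite H0.
    destruct (Rle_dec X (2 * (-q))) as [ok|no]; [lra|].
    exfalso. set (t := (1 + (-2 * q) / X) / 2).
    assert (Xp : 0 < X) by lra.
    assert (r0 : 0 <= (-2 * q) / X) by (apply Rdiv_le_0_compat; lra).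
    assert (r1 : (-2 * q) / X < 1).
    { apply (Rmult_lt_reg_r X); auto. unfold Rdiv. rewrite Rmult_assoc, Rinv_l by lra. lra. }
    assert (rX : (-2 * q) / X * X = -2 * q) by (field; lra).
    specialize (Key t). rewrite E0 in Key. unfold t in Key.
    assert (T : 0 <= (1 + -2 * q / X) / 2 <= 1) by lra.
    specialize (Key T). change (m * dot d d) with X in Key.
    set (r := -2 * q / X) in *. clearbody r.
    replace (-q) with (r * X / 2) in Key by lra.
    replace (1 - (1 + r) / 2 * (1 - 0)) with ((1 - r) / 2) in Key by lra.
    assert (0 < (1 - r) / 2) by lra.
    assert ((1 + r) / 2 * X / 2 <= r * X / 2).
    { apply (Rmult_le_reg_r ((1 - r) / 2)); auto. nra. }
    nra.
  - assert (sp : 0 < s) by (unfold s; apply sqrt_lt_R0; lra).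
    specialize (Key (1 / (1 + s))).
    assert (T : 0 <= 1 / (1 + s) <= 1).
    { split. apply Rdiv_le_0_compat; lra.
      apply (Rmult_le_reg_r (1 + s)); [lra|]. unfold Rdiv. rewrite Rmult_assoc, Rinv_l by lra. lra. }
    specialize (Key T). change (m * dot d d) with X in Key. rewrite <- ss in Key.
    replace (1 / (1 + s) * (1 - 1 / (1 + s)) * X / 2) with (s * X / (2 * (1 + s) ^ 2)) in Key by (field; lra).
    replace (- q * (1 - 1 / (1 + s) * (1 - s * s))) with (- q * s) in Key by (field; lra).
    assert (P : 0 < 2 * (1 + s) ^ 2) by nra.
    apply (Rmult_le_compat_r (2 * (1 + s) ^ 2)) in Key; [|lra].
    unfold Rdiv in Key. rewrite Rmult_assoc, Rinv_l in Key by lra. nra.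
Qed.


Lemma w_facts M sigma : 0 < sigma <= M ->
  let w := 1 + / sigma + sqrt (1 - 2 / M + / sigma ^ 2) in 2 <= w /\ 2 * / sigma <= w.
Proof.
  intros Hs w. set (u := / sigma).
  assert (u0 : 0 < u) by (apply Rinv_0_lt_compat; lra).
  assert (Mu : / M <= u) by (apply Rinv_le_contravar; lra).
  assert (A : Rsqr (1 - u) <= 1 - 2 / M + / sigma ^ 2).
  { unfold Rsqr. replace (/ sigma ^ 2) with (u * u) by (unfold u; field; lra).
    unfold Rdiv. nra. }
  apply sqrt_le_1_alt in A. rewrite sqrt_Rsqr_abs in A.
  unfold w. fold u. split.
  - destruct (Rabs_pos (1 - u)); pose proof (Rle_abs (1 - u)); pose proof (Rle_abs (-(1 - u))); rewrite Rabs_Ropp in *; lra.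
  - pose proof (Rle_abs (-(1 - u))). rewrite Rabs_Ropp in *. lra.
Qed.

Lemma G_bound {N : nat} (dom : V N -> Prop) (gf : V N -> V N) (psi : V N -> R) x H G q M sigma : ext_convex dom psi -> dom x -> is_argmin_QI dom gf psi x G ->
  is_Qinf dom gf psi x H q -> quad H G <= M * dot G G -> 0 < sigma <= M ->
  dot G G <= cst M sigma / (2 * sigma) * (- q).
Proof.
  intros C Dx [DG HGm] [Hq _] HM Hs.
  set (D := dot G G). assert (D0 : 0 <= D) by apply dot_nonneg.
  set (Dl := dot (gf x) G + psi (vadd x G) - psi x).
  assert (QI : forall s, 0 <= s <= 1 -> Dl + D / 2 <= s * (Dl + D / 2) - s * (1 - s) / 2 * D).
  { intros s Hs'. pose proof (HGm _ (proj1 (seg_dom dom gf psi x G s C Dx DG Hs'))) as A.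
    pose proof (Q_seg dom gf psi x (Iden N) G s C Dx DG Hs') as B.
    assert (QG : Qval gf psi x (Iden N) G = Dl + D / 2) by (unfold Qval, Dl, D; rewrite quad_Iden; lra).
    rewrite QG in A, B. rewrite quad_Iden in B. fold D in B. lra. }
  assert (Dl1 : Dl <= - D).
  { destruct (Rle_dec Dl (- D)) as [ok|no]; [exact ok|exfalso].
    destruct (Rle_dec 0 Dl) as [P|P].
    - specialize (QI 0 ltac:(lra)). lra.
    - assert (Dp : 0 < D) by lra.
      set (s := - Dl / D).
      assert (sD : s * D = - Dl) by (unfold s; field; lra).
      assert (s0 : 0 < s) by (unfold s; apply Rdiv_lt_0_compat; lra).
      assert (s1 : s < 1).
      { apply (Rmult_lt_reg_r D); auto. lra. }
      specialize (QI s ltac:(lra)).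
      assert (E : (1 - s) * (Dl + D / 2 + s * D / 2) <= 0) by nra.
      assert (Dl + D / 2 + s * D / 2 <= 0).
      { destruct (Rle_dec (Dl + D / 2 + s * D / 2) 0); auto. nra. }
      lra. }
  assert (QH : forall t, 0 <= t <= 1 -> - q >= t * D - t * t * M * D / 2).
  { intros t Ht. pose proof (Hq _ (proj1 (seg_dom dom gf psi x G t C Dx DG Ht))) as A.
    pose proof (Q_seg dom gf psi x H G t C Dx DG Ht) as B.
    assert (QG : Qval gf psi x H G = Dl + quad H G / 2) by (unfold Qval, Dl; lra).
    rewrite QG in B.
    assert (B' : Qval gf psi x H (vscale t G) <= t * Dl + t * t / 2 * quad H G) by lra.
    assert (0 <= t * t) by nra.
    assert (t * Dl <= t * (- D)) by (apply Rmult_le_compat_l; lra).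
    assert (t * t * quad H G <= t * t * (M * D)) by (apply Rmult_le_compat_l; auto). lra. }
  destruct (w_facts M sigma Hs) as [W1 W2].
  set (w := 1 + / sigma + sqrt (1 - 2 / M + / sigma ^ 2)) in *.
  set (u := / sigma) in *.
  assert (u0 : 0 < u) by (apply Rinv_0_lt_compat; lra).
  assert (E : cst M sigma / (2 * sigma) = M ^ 2 * w ^ 2 * u / 2) by (unfold cst, w, u; field; lra).
  rewrite E. assert (su : sigma * u = 1) by (unfold u; field; lra).
  assert (Mu : M * u >= 1).
  { destruct Hs as [Hs1 Hs2]. assert (M * u >= sigma * u) by (apply Rmult_ge_compat_r; lra). lra. }
  assert (w2 : w ^ 2 >= 4) by nra.
  destruct (Rle_dec 1 M) as [M1|M1].
  - specialize (QH (/ M)). assert (Mi : 0 < / M) by (apply Rinv_0_lt_compat; lra).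
    assert (MM : M * / M = 1) by (field; lra).
    assert (Mi1 : / M <= 1) by (rewrite <- Rinv_1; apply Rinv_le_contravar; lra).
    specialize (QH ltac:(lra)).
    replace (/ M * D - / M * / M * M * D / 2) with (/ M * D / 2) in QH by (field; lra).
    assert (K : 2 * M <= M ^ 2 * w ^ 2 * u / 2).
    { assert (M ^ 2 * w ^ 2 * u / 2 = (M * u) * (w ^ 2) * M / 2) by field.
      assert ((M * u) * (w ^ 2) >= 1 * 4) by (apply Rmult_ge_compat; lra).
      nra. }
    assert (0 <= - q) by (pose proof (Rmult_le_pos _ _ (Rlt_le _ _ Mi) D0); lra).
    assert (2 * M * (- q) <= M ^ 2 * w ^ 2 * u / 2 * (- q)) by (apply Rmult_le_compat_r; lra).
    assert (D = 2 * M * (/ M * D / 2)) by (field; lra). nra.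
  - specialize (QH 1 ltac:(lra)).
    assert (u1 : u > 1) by nra.
    assert (K : 2 <= M ^ 2 * w ^ 2 * u / 2).
    { assert (ww : w * w >= (2 * u) * (2 * u)) by (apply Rmult_ge_compat; lra).
      assert (MM : (M * u) * (M * u) >= 1 * 1) by (apply Rmult_ge_compat; lra).
      assert (M ^ 2 * w ^ 2 * u / 2 = ((M * u) * (M * u)) * (w * w) / (u * u) * u / 2) by (field; lra).
      assert (((M * u) * (M * u)) * (w * w) >= 1 * ((2 * u) * (2 * u))) by (apply Rmult_ge_compat; nra).
      assert (((M * u) * (M * u)) * (w * w) / (u * u) >= 4).
      { apply Rle_ge. apply (Rmult_le_reg_r (u * u)); [nra|]. unfold Rdiv. rewrite Rmult_assoc, Rinv_l by nra. nra. }
      nra. }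
    assert (0 <= - q) by nra.
    assert (2 * (- q) <= M ^ 2 * w ^ 2 * u / 2 * (- q)) by (apply Rmult_le_compat_r; lra).
    nra.
Qed.




Lemma accept_ok {N : nat} (dom : V N -> Prop) (gf : V N -> V N) (psi : V N -> R) f L x H d eta gamma m q :
 has_gradient f gf -> lipschitz_grad gf L -> 0 < L -> ext_convex dom psi -> dom x -> dom (vadd x d) ->
 0 <= eta < 1 -> 0 < gamma <= 1 -> is_Qinf dom gf psi x H q -> Qval gf psi x H d <= (1 - eta) * q ->
 m * dot d d <= quad H d -> 0 < m -> L * (1 + sqrt eta) / (2 - gamma * (1 - sqrt eta)) <= m ->
 accept2 f gf psi gamma x H d.
Proof.
  intros HG HL L0 C Dx Dd He Hg Hq HQd Hm m0 Hth.
  pose proof (descent f gf L x d HG HL ltac:(lra)) as Ds.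
  pose proof (inexact_bound dom gf psi x H eta d q m C Dx Dd He Hq HQd Hm m0) as IB.
  pose proof (Qinf_nonpos dom gf psi x H q Dx Hq) as q0.
  set (s := sqrt eta) in *. assert (s0 : 0 <= s) by apply sqrt_pos.
  assert (ss : s * s = eta) by (apply sqrt_sqrt; lra).
  assert (s1 : s < 1) by nra.
  set (D := dot d d) in *. assert (D0 : 0 <= D) by apply dot_nonneg.
  set (qd := quad H d) in *.
  set (Qd := Qval gf psi x H d) in *.
  assert (EQ : Qd = dot (gf x) d + / 2 * qd + psi (vadd x d) - psi x) by reflexivity.
  assert (den : 0 < 2 - gamma * (1 - s)) by nra.
  assert (Th : L * (1 + s) <= m * (2 - gamma * (1 - s))).
  { apply (Rmult_le_compat_r (2 - gamma * (1 - s))) in Hth; [|lra].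
    unfold Rdiv in Hth. rewrite Rmult_assoc, Rinv_l in Hth by lra. lra. }
  assert (S1 : (1 - gamma) * (1 - s) * (m * D) <= (1 - gamma) * (1 - s) * (2 * (1 + s) ^ 2 * (- q))).
  { apply Rmult_le_compat_l; [nra|exact IB]. }
  assert (S2 : (1 + s) * (m * D) <= (1 + s) * qd) by (apply Rmult_le_compat_l; lra).
  assert (S3 : 0 <= D * (m * (2 - gamma * (1 - s)) - L * (1 + s))) by (apply Rmult_le_pos; lra).
  assert (Key : 0 <= 2 * (1 + s) * ((1 - gamma) * (1 - eta) * (- q) + qd / 2 - L * D / 2)).
  { rewrite <- ss. nra. }
  assert (Key2 : 0 <= (1 - gamma) * (1 - eta) * (- q) + qd / 2 - L * D / 2).
  { destruct (Rle_dec 0 ((1 - gamma) * (1 - eta) * (- q) + qd / 2 - L * D / 2)); auto. nra. }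
  assert (S4 : (1 - gamma) * ((1 - eta) * (- q)) <= (1 - gamma) * (- Qd)) by (apply Rmult_le_compat_l; lra).
  unfold accept2, Fval. fold Qd. split.
  - nra.
  - assert (Qd <= 0) by nra. nra.
Qed.

Lemma armijo_holds {N : nat} (dom : V N -> Prop) (gf : V N -> V N) (psi : V N -> R) f L x H d eta gamma sigma q al :
 has_gradient f gf -> lipschitz_grad gf L -> 0 < L -> ext_convex dom psi -> dom x -> dom (vadd x d) ->
 0 <= eta < 1 -> 0 < gamma < 1 -> is_Qinf dom gf psi x H q -> Qval gf psi x H d <= (1 - eta) * q ->
 sigma * dot d d <= quad H d -> 0 < sigma -> 0 < al <= 1 ->
 al <= 2 * (1 - gamma) * sigma / (L * (1 + sqrt eta)) ->
 armijo_ok f gf dom psi gamma x d al.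
Proof.
  intros HG HL L0 C Dx Dd He Hg Hq HQd Hm m0 Ha Hal.
  pose proof (descent f gf L x (vscale al d) HG HL ltac:(lra)) as Ds.
  rewrite dot_scal_r, dot_scal_scal in Ds.
  pose proof (inexact_bound dom gf psi x H eta d q sigma C Dx Dd He Hq HQd Hm m0) as IB.
  pose proof (Qinf_nonpos dom gf psi x H q Dx Hq) as q0.
  destruct (seg_dom dom gf psi x d al C Dx Dd ltac:(lra)) as [Dom Psi].
  set (s := sqrt eta) in *. assert (s0 : 0 <= s) by apply sqrt_pos.
  assert (ss : s * s = eta) by (apply sqrt_sqrt; lra).
  assert (s1 : s < 1) by nra.
  set (D := dot d d) in *. assert (D0 : 0 <= D) by apply dot_nonneg.
  set (qd := quad H d) in *.
  set (Qd := Qval gf psi x H d) in *.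
  assert (EQ : Qd = dot (gf x) d + / 2 * qd + psi (vadd x d) - psi x) by reflexivity.
  assert (Hal' : al * (L * (1 + s)) <= 2 * (1 - gamma) * sigma).
  { apply (Rmult_le_compat_r (L * (1 + s))) in Hal; [|nra].
    unfold Rdiv in Hal. rewrite Rmult_assoc, Rinv_l in Hal by nra. lra. }
  assert (S1 : (1 - s) * (sigma * D) <= (1 - s) * (2 * (1 + s) ^ 2 * (- q))) by (apply Rmult_le_compat_l; lra).
  assert (S2 : (1 - eta) * (- q) * (2 * (1 + s)) >= (1 - s) * (sigma * D)) by (rewrite <- ss; nra).
  assert (S3 : al * L * D * (1 + s) <= 2 * (1 - gamma) * sigma * D) by nra.
  assert (S4 : (1 - gamma) * ((1 - eta) * (- q)) <= (1 - gamma) * (- Qd)) by (apply Rmult_le_compat_l; lra).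
  (* (1-gamma)(-Delta) >= al L D / 2 *)
  assert (K0 : (1 - gamma) * ((1 - eta) * (- q) + qd / 2) * (2 * (1 + s)) >= al * L * D * (1 + s)).
  { assert ((1 - gamma) * (sigma * D * (1 + s)) <= (1 - gamma) * (qd * (1 + s))) by
      (apply Rmult_le_compat_l; nra).
    assert ((1 - gamma) * ((1 - s) * (sigma * D)) <= (1 - gamma) * ((1 - eta) * (- q) * (2 * (1 + s)))) by
      (apply Rmult_le_compat_l; lra).
    nra. }
  assert (K : (1 - gamma) * ((1 - eta) * (- q) + qd / 2) >= al * L * D / 2).
  { destruct (Rge_dec ((1 - gamma) * ((1 - eta) * (- q) + qd / 2)) (al * L * D / 2)); auto. nra. }
  assert (K2 : al * (al * L * D / 2) <= al * ((1 - gamma) * (- Qd + qd / 2))) by (apply Rmult_le_compat_l; lra).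
  replace (- Qd + qd / 2) with (-(dot (gf x) d + psi (vadd x d) - psi x)) in K2 by lra.
  unfold armijo_ok, Fval, Defs.Delta. split; auto.
  lra.
Qed.


Lemma min_upto_le k g t : (t <= k)%nat -> min_upto k g <= g t.
Proof.
  induction k; intros Ht; simpl.
  - assert (t = 0%nat) by lia. subst. lra.
  - destruct (Nat.eq_dec t (S k)) as [->|ne]. apply Rmin_r.
    eapply Rle_trans; [apply Rmin_l|]. apply IHk. lia.
Qed.

Lemma min_upto_ge k g c : (forall t, (t <= k)%nat -> c <= g t) -> c <= min_upto k g.
Proof.
  induction k; intros Ht; simpl. apply Ht; lia.
  apply Rmin_glb. apply IHk; intros; apply Ht; lia. apply Ht; lia.
Qed.

Lemma min_upto_pos k g : (forall t, 0 < g t) -> 0 < min_upto k g.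
Proof. induction k; intros Ht; simpl; auto. apply Rmin_glb_lt; auto. Qed.

Lemma telescope (Fs g : nat -> R) B k : 0 <= B ->
  (forall t, (t <= k)%nat -> B * g t <= Fs t - Fs (S t)) ->
  (INR k + 1) * B * min_upto k g <= Fs O - Fs (S k).
Proof.
  intros B0. induction k; intros Ht.
  - simpl. specialize (Ht O ltac:(lia)). lra.
  - rewrite S_INR. simpl min_upto.
    specialize (IHk (fun t H => Ht t ltac:(lia))).
    specialize (Ht (S k) ltac:(lia)).
    set (m := min_upto k g) in *.
    pose proof (Rmin_l m (g (S k))). pose proof (Rmin_r m (g (S k))).
    assert (B * Rmin m (g (S k)) <= B * m) by (apply Rmult_le_compat_l; auto).
    assert (B * Rmin m (g (S k)) <= B * g (S k)) by (apply Rmult_le_compat_l; auto).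
    assert ((INR k + 1) * (B * Rmin m (g (S k))) <= (INR k + 1) * (B * m)).
    { apply Rmult_le_compat_l; auto. pose proof (pos_INR k); lra. }
    lra.
Qed.

Lemma finish (Fs g : nat -> R) Fstar k c gamma eta A :
  0 < c -> 0 < gamma -> 0 <= eta < 1 -> 0 < A ->
  (forall t, (t <= k)%nat -> exists qt, g t <= c * (- qt) /\ A * gamma * (1 - eta) * (- qt) <= Fs t - Fs (S t)) ->
  Fstar <= Fs (S k) ->
  min_upto k g <= (Fs O - Fstar) / (gamma * (INR k + 1)) * (c / ((1 - eta) * A)).
Proof.
  intros c0 g0 e0 A0 Hgs Hf.
  set (B := A * gamma * (1 - eta) / c).
  assert (B0 : 0 < B) by (unfold B; apply Rdiv_lt_0_compat; [apply Rmult_lt_0_compat; [nra|lra]|lra]).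
  assert (T := telescope Fs g B k (Rlt_le _ _ B0)).
  assert (H1 : forall t, (t <= k)%nat -> B * g t <= Fs t - Fs (S t)).
  { intros t Ht. destruct (Hgs t Ht) as [qt [Hg Hs]].
    assert (B * g t <= B * (c * - qt)) by (apply Rmult_le_compat_l; lra).
    assert (B * (c * - qt) = A * gamma * (1 - eta) * (- qt)) by (unfold B; field; lra).
    lra. }
  specialize (T H1).
  assert (k0 : 0 < INR k + 1) by (pose proof (pos_INR k); lra).
  assert (P : 0 < (INR k + 1) * B) by nra.
  set (mn := min_upto k g) in *.
  assert (mn <= (Fs O - Fstar) / ((INR k + 1) * B)).
  { apply (Rmult_le_reg_r ((INR k + 1) * B)); auto. unfold Rdiv.
    rewrite Rmult_assoc, Rinv_l by lra. lra. }
  replace ((Fs O - Fstar) / (gamma * (INR k + 1)) * (c / ((1 - eta) * A)))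
    with ((Fs O - Fstar) / ((INR k + 1) * B)) by (unfold B; field; repeat split; lra).
  auto.
Qed.


Lemma vnorm_pow2 {N : nat} (u : V N) : vnorm u ^ 2 = dot u u.
Proof. unfold vnorm. apply pow2_sqrt, dot_nonneg. Qed.

Lemma pow_le_1 x j : 0 <= x <= 1 -> x ^ j <= 1.
Proof. intros Hx. induction j; simpl; [lra|]. pose proof (pow_le x j (proj1 Hx)). nra. Qed.

Lemma cst_nonneg M s : 0 <= cst M s.
Proof. unfold cst. apply Rmult_le_pos; apply pow2_ge_0. Qed.


Lemma alg2_common {n : nat} (Htr : R -> Mat n -> nat -> Mat n) f gf L dom psi Fstar eta
  beta gamma m0 M0 x H0 jk D G Mt :
  assumption1 f gf L dom psi Fstar -> 0 <= eta < 1 -> 0 < gamma <= 1 -> 0 < m0 -> m0 <= Mt ->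
  alg2_run Htr f gf dom psi eta beta gamma m0 M0 x H0 jk D ->
  (forall t, is_argmin_QI dom gf psi (x t) (G t)) ->
  (forall t, quad (Htr beta (H0 t) (jk t)) (G t) <= Mt * dot (G t) (G t)) ->
  forall k : nat,
    min_upto k (fun t => vnorm (G t) ^ 2)
      <= (Fval f psi (x O) - Fstar) / (gamma * (INR k + 1))
         * (cst Mt m0 / (2 * (1 - eta) * m0)).
Proof.
  intros A1 He Hg Hm HmM [Dx0 Run] HGm Hbd k.
  destruct A1 as [HG [L0 [HL [_ [C [_ [Fb _]]]]]]].
  assert (Dx : forall t, dom (x t)).
  { induction t; auto. destruct (Run t) as [_ [_ [Inx [_ [_ Ex]]]]].
    rewrite Ex. exact (proj1 (Inx (jk t) (le_n _))). }
  assert (cpos : 0 < cst Mt m0).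
  { destruct (w_facts Mt m0 ltac:(lra)) as [W1 _]. unfold cst.
    apply Rmult_lt_0_compat; apply pow_lt; lra. }
  assert (Hfin : min_upto k (fun t => vnorm (G t) ^ 2)
     <= (Fval f psi (x O) - Fstar) / (gamma * (INR k + 1)) * (cst Mt m0 / (2 * m0) / ((1 - eta) * 1))).
  { apply (finish (fun t => Fval f psi (x t))); auto; try lra.
    - apply Rdiv_lt_0_compat; lra.
    - intros t Ht.
      destruct (Run t) as [_ [Lw [Inx [_ [Acc Ex]]]]].
      destruct (Inx (jk t) (le_n _)) as [Dd [q [Hq HQd]]].
      exists q. split.
      + rewrite vnorm_pow2. apply (G_bound dom gf psi (x t) (Htr beta (H0 t) (jk t)) (G t) q Mt m0); auto; lra.
      + pose proof (Qinf_nonpos dom gf psi (x t) (Htr beta (H0 t) (jk t)) q (Dx t) Hq) as q0.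
        rewrite Ex. destruct Acc as [Acc _].
        assert (gamma * Qval gf psi (x t) (Htr beta (H0 t) (jk t)) (D t (jk t)) <= gamma * ((1 - eta) * q))
          by (apply Rmult_le_compat_l; lra).
        lra. }
  replace (cst Mt m0 / (2 * m0) / ((1 - eta) * 1)) with (cst Mt m0 / (2 * (1 - eta) * m0)) in Hfin
    by (field; repeat split; lra).
  exact Hfin.
Qed.

Lemma alg2_dom {n : nat} (Htr : R -> Mat n -> nat -> Mat n) f gf dom psi eta
  beta gamma m0 M0 x H0 jk D :
  alg2_run Htr f gf dom psi eta beta gamma m0 M0 x H0 jk D -> forall t, dom (x t).
Proof.
  intros [Dx0 Run]. induction t; auto. destruct (Run t) as [_ [_ [Inx [_ [_ Ex]]]]].
  rewrite Ex. exact (proj1 (Inx (jk t) (le_n _))).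
Qed.

Lemma reject_bound {n : nat} (Htr : R -> Mat n -> nat -> Mat n) f gf L dom psi Fstar eta
  beta gamma m0 M0 x H0 jk D t i m :
  assumption1 f gf L dom psi Fstar -> 0 <= eta < 1 -> 0 < gamma <= 1 ->
  alg2_run Htr f gf dom psi eta beta gamma m0 M0 x H0 jk D ->
  (i < jk t)%nat -> 0 < m ->
  (forall v, m * dot v v <= quad (Htr beta (H0 t) i) v) ->
  m < L * (1 + sqrt eta) / (2 - gamma * (1 - sqrt eta)).
Proof.
  intros A1 He Hg Run Hi m0' Hm.
  pose proof (alg2_dom _ _ _ _ _ _ _ _ _ _ _ _ _ _ Run t) as Dx.
  destruct A1 as [HG [L0 [HL [_ [C [_ [Fb _]]]]]]].
  destruct Run as [_ Run]. destruct (Run t) as [_ [_ [Inx [Rej _]]]].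
  destruct (Inx i ltac:(lia)) as [Dd [q [Hq HQd]]].
  destruct (Rlt_dec m (L * (1 + sqrt eta) / (2 - gamma * (1 - sqrt eta)))) as [ok|no]; auto.
  exfalso. apply (Rej i Hi).
  apply (accept_ok dom gf psi f L (x t) _ (D t i) eta gamma m q); auto. lra.
Qed.

Lemma bound_v1 {n : nat} f gf L dom psi Fstar eta beta gamma m0 M0 (x : nat -> V n) H0 jk D :
  assumption1 f gf L dom psi Fstar -> 0 <= eta < 1 -> 0 < beta < 1 -> 0 < gamma <= 1 ->
  0 < m0 -> m0 <= M0 ->
  alg2_run Htrial1 f gf dom psi eta beta gamma m0 M0 x H0 jk D ->
  forall t v, quad (Htrial1 beta (H0 t) (jk t)) v <= Mtilde1 L beta gamma m0 M0 eta * dot v v.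
Proof.
  intros A1 He Hb Hg Hm HmM Run t v.
  pose proof (proj2 Run t) as [_ [Lw _]].
  pose proof (Lw v) as [lo hi]. pose proof (dot_nonneg v) as dv.
  assert (L0 : 0 < L) by (destruct A1 as [_ [L0 _]]; exact L0).
  set (s := sqrt eta) in *. assert (s0 : 0 <= s) by apply sqrt_pos.
  assert (ss : s * s = eta) by (apply sqrt_sqrt; lra).
  assert (s1 : s < 1) by nra.
  assert (den : 0 < 2 - gamma * (1 - s)) by nra.
  set (th := L * (1 + s) / (2 - gamma * (1 - s))).
  set (R2 := L * (1 + s) / (beta * (2 - gamma * (1 - s)) * m0)).
  assert (ER : R2 = th / (beta * m0)) by (unfold R2, th; field; repeat split; lra).
  unfold Mtilde1. fold s. fold R2.
  pose proof (Rmax_l 1 R2). pose proof (Rmax_r 1 R2).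
  unfold Htrial1. rewrite quad_mscale.
  destruct (jk t) as [|i] eqn:E.
  - simpl. rewrite Rinv_1. assert (M0 * dot v v <= M0 * Rmax 1 R2 * dot v v).
    { assert (0 <= M0 * dot v v) by nra.
      replace (M0 * Rmax 1 R2 * dot v v) with (Rmax 1 R2 * (M0 * dot v v)) by ring.
      replace (M0 * dot v v) with (1 * (M0 * dot v v)) at 1 by ring.
      apply Rmult_le_compat_r; lra. }
    lra.
  - assert (bi : 0 < beta ^ i) by (apply pow_lt; lra).
    set (ib := / beta ^ i). assert (ib0 : 0 < ib) by (apply Rinv_0_lt_compat; lra).
    assert (RB : m0 * ib < th).
    { apply (reject_bound Htrial1 f gf L dom psi Fstar eta beta gamma m0 M0 x H0 jk D t i); auto.
      rewrite E; lia. nra.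
      intros w. unfold Htrial1. rewrite quad_mscale. pose proof (proj1 (Lw w)).
      fold ib. assert (ib * (m0 * dot w w) <= ib * quad (H0 t) w) by (apply Rmult_le_compat_l; lra). lra. }
    assert (EB : / beta ^ S i = / beta * ib) by (simpl; unfold ib; rewrite Rinv_mult; reflexivity).
    rewrite EB.
    assert (bb : 0 < / beta) by (apply Rinv_0_lt_compat; lra).
    assert (S1 : / beta * ib * quad (H0 t) v <= / beta * ib * (M0 * dot v v)) by (apply Rmult_le_compat_l; nra).
    assert (S2 : / beta * ib <= R2).
    { rewrite ER. apply (Rmult_le_reg_r (beta * m0)); [nra|].
      replace (th / (beta * m0) * (beta * m0)) with th by (field; lra).
      replace (/ beta * ib * (beta * m0)) with (m0 * ib) by (field; lra). lra. }
    assert (S3 : / beta * ib * (M0 * dot v v) <= R2 * (M0 * dot v v)) by (apply Rmult_le_compat_r; nra).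
    assert (S4 : R2 * (M0 * dot v v) <= Rmax 1 R2 * (M0 * dot v v)) by (apply Rmult_le_compat_r; nra).
    lra.
Qed.

Lemma quad_Htrial2_S {n : nat} beta (H : Mat n) i v :
  quad (Htrial2 beta H (S i)) v = quad H v + / beta ^ i * dot v v.
Proof. simpl. rewrite quad_madd, quad_mscale, quad_Iden. reflexivity. Qed.

Lemma bound_v2 {n : nat} f gf L dom psi Fstar eta beta gamma m0 M0 (x : nat -> V n) H0 jk D :
  assumption1 f gf L dom psi Fstar -> 0 <= eta < 1 -> 0 < beta < 1 -> 0 < gamma <= 1 ->
  0 < m0 -> m0 <= M0 ->
  alg2_run Htrial2 f gf dom psi eta beta gamma m0 M0 x H0 jk D ->
  forall t v, quad (Htrial2 beta (H0 t) (jk t)) v <= Mtilde2 L beta gamma m0 M0 eta * dot v v.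
Proof.
  intros A1 He Hb Hg Hm HmM Run t v.
  pose proof (proj2 Run t) as [_ [Lw _]].
  pose proof (Lw v) as [lo hi]. pose proof (dot_nonneg v) as dv.
  set (th := L * (1 + sqrt eta) / (2 - gamma * (1 - sqrt eta))).
  set (R2 := / beta * (th - m0)).
  unfold Mtilde2. fold th. fold R2.
  pose proof (Rmax_l 1 R2). pose proof (Rmax_r 1 R2).
  assert (S0 : M0 * dot v v + 1 * dot v v <= (M0 + Rmax 1 R2) * dot v v) by nra.
  destruct (jk t) as [|[|i]] eqn:E.
  - simpl. nra.
  - rewrite quad_Htrial2_S. simpl. rewrite Rinv_1. lra.
  - rewrite quad_Htrial2_S.
    assert (bi : 0 < beta ^ i) by (apply pow_lt; lra).
    set (ib := / beta ^ i). assert (ib0 : 0 < ib) by (apply Rinv_0_lt_compat; lra).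
    assert (RB : m0 + ib < th).
    { apply (reject_bound Htrial2 f gf L dom psi Fstar eta beta gamma m0 M0 x H0 jk D t (S i)); auto.
      rewrite E; lia. lra.
      intros w. rewrite quad_Htrial2_S. pose proof (proj1 (Lw w)). fold ib. lra. }
    assert (EB : / beta ^ S i = / beta * ib) by (simpl; unfold ib; rewrite Rinv_mult; reflexivity).
    rewrite EB.
    assert (bb : 0 < / beta) by (apply Rinv_0_lt_compat; lra).
    assert (S2 : / beta * ib <= R2).
    { unfold R2. apply Rmult_le_compat_l; lra. }
    assert (S3 : / beta * ib * dot v v <= Rmax 1 R2 * dot v v) by (apply Rmult_le_compat_r; lra).
    lra.
Qed.

Theorem corollary3 (n : nat) (f : V n -> R) (gf : V n -> V n) (L : R)
  (dom : V n -> Prop) (psi : V n -> R) (Fstar eta : R) :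
  assumption1 f gf L dom psi Fstar ->
  0 <= eta < 1 ->
  (* Algorithm 1 *)
  (forall (beta gamma sigma M : R) (x : nat -> V n) (H : nat -> Mat n)
          (d : nat -> V n) (alpha : nat -> R) (G : nat -> V n),
      0 < beta < 1 -> 0 < gamma < 1 -> 0 < sigma -> sigma <= M ->
      alg1_run f gf dom psi eta beta gamma sigma M x H d alpha ->
      (forall t, is_argmin_QI dom gf psi (x t) (G t)) ->
      forall k : nat,
        min_upto k (fun t => vnorm (G t) ^ 2)
          <= (Fval f psi (x O) - Fstar) / (gamma * (INR k + 1))
             * (cst M sigma / (2 * (1 - eta) * sigma * min_upto k alpha))
        /\
        (Fval f psi (x O) - Fstar) / (gamma * (INR k + 1))
             * (cst M sigma / (2 * (1 - eta) * sigma * min_upto k alpha))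
          <= (Fval f psi (x O) - Fstar) / (gamma * (INR k + 1))
             * (cst M sigma / (2 * sigma))
             * Rmax (/ (1 - eta)) (L / (2 * (1 - sqrt eta) * (1 - gamma) * sigma * beta)))
  /\
  (* Algorithm 2, Variant 1 *)
  (forall (beta gamma m0 M0 : R) (x : nat -> V n) (H0 : nat -> Mat n)
          (jk : nat -> nat) (D : nat -> nat -> V n) (G : nat -> V n),
      0 < beta < 1 -> 0 < gamma <= 1 -> 0 < m0 -> m0 <= M0 ->
      alg2_run Htrial1 f gf dom psi eta beta gamma m0 M0 x H0 jk D ->
      (forall t, is_argmin_QI dom gf psi (x t) (G t)) ->
      forall k : nat,
        min_upto k (fun t => vnorm (G t) ^ 2)
          <= (Fval f psi (x O) - Fstar) / (gamma * (INR k + 1))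
             * (cst (Mtilde1 L beta gamma m0 M0 eta) m0 / (2 * (1 - eta) * m0)))
  /\
  (* Algorithm 2, Variant 2 *)
  (forall (beta gamma m0 M0 : R) (x : nat -> V n) (H0 : nat -> Mat n)
          (jk : nat -> nat) (D : nat -> nat -> V n) (G : nat -> V n),
      0 < beta < 1 -> 0 < gamma <= 1 -> 0 < m0 -> m0 <= M0 ->
      alg2_run Htrial2 f gf dom psi eta beta gamma m0 M0 x H0 jk D ->
      (forall t, is_argmin_QI dom gf psi (x t) (G t)) ->
      forall k : nat,
        min_upto k (fun t => vnorm (G t) ^ 2)
          <= (Fval f psi (x O) - Fstar) / (gamma * (INR k + 1))
             * (cst (Mtilde2 L beta gamma m0 M0 eta) m0 / (2 * (1 - eta) * m0))).
Proof.
  intros A1 He. pose proof A1 as A1'. destruct A1' as [HG [L0 [HL [_ [C [_ [Fb _]]]]]]].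
  set (s := sqrt eta). assert (s0 : 0 <= s) by apply sqrt_pos.
  assert (ss : s * s = eta) by (apply sqrt_sqrt; lra).
  assert (s1 : s < 1) by nra.
  split; [|split].
  -
    intros beta gamma sigma M x H d alpha G Hb Hg Hs HsM [Dx0 Run] HGm k.
    assert (Dx : forall t, dom (x t)).
    { induction t; auto. destruct (Run t) as [_ [_ [_ [[i [Ea [Arm _]]] Ex]]]].
      rewrite Ex, Ea. exact (proj1 Arm). }
    assert (apos : forall t, 0 < alpha t).
    { intros t. destruct (Run t) as [_ [_ [_ [[i [Ea _]] _]]]]. rewrite Ea. apply pow_lt; lra. }
    set (A := min_upto k alpha).
    assert (A0 : 0 < A) by (apply min_upto_pos; auto).
    set (ab := 2 * (1 - gamma) * sigma / (L * (1 + s))).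
    assert (ab0 : 0 < ab) by (unfold ab; apply Rdiv_lt_0_compat; nra).
    assert (Alow : Rmin 1 (beta * ab) <= A).
    { apply min_upto_ge. intros t _.
      destruct (Run t) as [_ [Lw [[Dd [q [Hq HQd]]] [[i [Ea [Arm Fail]]] Ex]]]].
      rewrite Ea. destruct i as [|j].
      - simpl. apply Rmin_l.
      - eapply Rle_trans; [apply Rmin_r|].
        destruct (Rle_dec (beta ^ j) ab) as [le|gt].
        + exfalso. apply (Fail j ltac:(lia)).
          apply (armijo_holds dom gf psi f L (x t) (H t) (d t) eta gamma sigma q (beta ^ j)); auto; try lra.
          * exact (proj1 (Lw (d t))).
          * split. apply pow_lt; lra. apply pow_le_1; lra.
        + simpl. assert (0 < beta) by lra. apply Rnot_le_lt in gt.
          left. apply Rmult_lt_compat_l; auto. }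
    assert (cpos : 0 < cst M sigma).
    { destruct (w_facts M sigma ltac:(lra)) as [W1 _]. unfold cst.
      apply Rmult_lt_0_compat; apply pow_lt; lra. }
    assert (Hfin : min_upto k (fun t => vnorm (G t) ^ 2)
       <= (Fval f psi (x O) - Fstar) / (gamma * (INR k + 1)) * (cst M sigma / (2 * sigma) / ((1 - eta) * A))).
    { apply (finish (fun t => Fval f psi (x t))); auto; try lra.
      - apply Rdiv_lt_0_compat; lra.
      - intros t Ht.
        destruct (Run t) as [_ [Lw [[Dd [q [Hq HQd]]] [[i [Ea [Arm Fail]]] Ex]]]].
        exists q. split.
        + rewrite vnorm_pow2. apply (G_bound dom gf psi (x t) (H t) (G t) q M sigma); auto.
          all: try exact (proj2 (Lw (G t))); try lra.
        + pose proof (Qinf_nonpos dom gf psi (x t) (H t) q (Dx t) Hq) as q0.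
          assert (AL : A <= alpha t) by (apply min_upto_le; auto).
          rewrite Ex. rewrite <- Ea in Arm. destruct Arm as [_ Arm].
          pose proof (proj1 (Lw (d t))) as Lwd. pose proof (dot_nonneg (d t)).
          assert (DQ : Defs.Delta gf psi (x t) (d t) <= (1 - eta) * q).
          { unfold Defs.Delta. unfold Qval in HQd. nra. }
          assert (alpha t * gamma * Defs.Delta gf psi (x t) (d t) <= alpha t * gamma * ((1 - eta) * q)).
          { apply Rmult_le_compat_l; auto. pose proof (apos t); nra. }
          assert (A * (gamma * ((1 - eta) * (- q))) <= alpha t * (gamma * ((1 - eta) * (- q)))).
          { apply Rmult_le_compat_r; auto. apply Rmult_le_pos; nra. }
          lra. }
    assert (EQ : cst M sigma / (2 * sigma) / ((1 - eta) * A) = cst M sigma / (2 * (1 - eta) * sigma * A))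
      by (field; repeat split; lra).
    rewrite EQ in Hfin. split; auto.
    assert (pre0 : 0 <= (Fval f psi (x O) - Fstar) / (gamma * (INR k + 1))).
    { apply Rdiv_le_0_compat. pose proof (Fb (x O) (Dx O)). lra.
      pose proof (pos_INR k). nra. }
    set (pre := (Fval f psi (x O) - Fstar) / (gamma * (INR k + 1))) in *.
    set (X := cst M sigma / (2 * sigma)).
    assert (X0 : 0 <= X) by (unfold X; apply Rdiv_le_0_compat; lra).
    assert (Y : / ((1 - eta) * A) <= Rmax (/ (1 - eta)) (L / (2 * (1 - s) * (1 - gamma) * sigma * beta))).
    { destruct (Rle_dec 1 A) as [AA1|AA1].
      - eapply Rle_trans; [|apply Rmax_l]. apply Rinv_le_contravar. lra. nra.
      - assert (bA : beta * ab <= A).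
        { revert Alow. unfold Rmin. destruct (Rle_dec 1 (beta * ab)); lra. }
        eapply Rle_trans; [|apply Rmax_r].
        apply Rle_trans with (/ ((1 - eta) * (beta * ab))).
        + apply Rinv_le_contravar. apply Rmult_lt_0_compat; nra. apply Rmult_le_compat_l; lra.
        + right. unfold ab. rewrite <- ss. field. repeat split; nra. }
    replace (cst M sigma / (2 * (1 - eta) * sigma * A)) with (X * / ((1 - eta) * A))
      by (unfold X; field; repeat split; lra).
    rewrite Rmult_assoc. apply Rmult_le_compat_l; auto. apply Rmult_le_compat_l; auto.
  - intros beta gamma m0 M0 x H0 jk D G Hb Hg Hm HmM Run HGm k.
    apply (alg2_common Htrial1 f gf L dom psi Fstar eta beta gamma m0 M0 x H0 jk D G); auto.
    + unfold Mtilde1. pose proof (Rmax_l 1 (L * (1 + sqrt eta) / (beta * (2 - gamma * (1 - sqrt eta)) * m0))). nra.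
    + intros t. apply (bound_v1 f gf L dom psi Fstar eta beta gamma m0 M0 x H0 jk D); auto.
  - intros beta gamma m0 M0 x H0 jk D G Hb Hg Hm HmM Run HGm k.
    apply (alg2_common Htrial2 f gf L dom psi Fstar eta beta gamma m0 M0 x H0 jk D G); auto.
    + unfold Mtilde2. pose proof (Rmax_l 1 (/ beta * (L * (1 + sqrt eta) / (2 - gamma * (1 - sqrt eta)) - m0))). nra.
    + intros t. apply (bound_v2 f gf L dom psi Fstar eta beta gamma m0 M0 x H0 jk D); auto.
Qed.
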